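(* Let $\operatorname{R}_4=\{a_0,a_1,a_2,a_3\}$ be the dihedral quandle of order $4$, with $a_ia_j=a_{2j-i \pmod 4}$. Then $\operatorname{Aut}(\mathbb{Z}[\operatorname{R}_4])\cong(\mathbb{Z}_2\times\mathbb{Z}_2)\rtimes\mathbb{Z}_2$.
   Context: For a quandle $Q$, the quandle ring $\mathbb{Z}[Q]$ is the free abelian group with basis $Q$, with multiplication $\big(\sum_i\alpha_i q_i\big)\big(\sum_j\beta_j q_j\big)=\sum_{i,j}\alpha_i\beta_j (q_iq_j)$. $\operatorname{Aut}(\mathbb{Z}[Q])$ denotes the group of ring automorphisms of $\mathbb{Z}[Q]$ (bijective additive maps preserving the multiplication). *)

(* Defs.v *)
From HB Require Import structures.
From mathcomp Require Import all_boot all_order all_algebra all_fingroup all_solvable.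
Set Implicit Arguments. Unset Strict Implicit. Unset Printing Implicit Defensive.
Import GRing.Theory.
Local Open Scope ring_scope.

(* The dihedral quandle R_4 on {a_0,a_1,a_2,a_3} ~ 'I_4 : a_i a_j = a_(2j - i mod 4). *)
Definition r4op (i j : 'I_4) : 'I_4 := inZp (2 * j + 3 * i)%N.

Definition ZR4 := {ffun 'I_4 -> int}.

Definition basis4 (i : 'I_4) : ZR4 := [ffun k => (k == i)%:R].

Definition qmul (x y : ZR4) : ZR4 :=
  [ffun k => \sum_(i < 4) \sum_(j < 4) if r4op i j == k then x i * y j else 0].

Definition is_ring_aut (f : ZR4 -> ZR4) : Prop :=
  [/\ {morph f : x y / x + y}, bijective f & {morph f : x y / qmul x y}].

Definition AutZR4 := {f : ZR4 -> ZR4 | is_ring_aut f}.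

(* Main.v *)
Require Import Defs.
From HB Require Import structures.
From mathcomp Require Import all_boot all_order all_algebra all_fingroup all_solvable.
From mathcomp Require Import ring lra zify.
From Stdlib Require Import ProofIrrelevance FunctionalExtensionality.
Set Implicit Arguments. Unset Strict Implicit. Unset Printing Implicit Defensive.
Import GRing.Theory Num.Theory.

Definition D4 := (bool * bool * bool)%type.
HB.instance Definition _ := Finite.on D4.

Definition dmul (a b : D4) : D4 :=
  let: (xa, ya, ha) := a in let: (xb, yb, hb) := b in
  (xb (+) (if hb then ya else xa), yb (+) (if hb then xa else ya), ha (+) hb).
Definition done_ : D4 := (false, false, false).
Definition dinv (a : D4) : D4 :=
  let: (x, y, h) := a in if h then (y, x, h) else (x, y, h).

Lemma dmulA : associative dmul.
Proof. by move=> [[[] []] []] [[[] []] []] [[[] []] []]. Qed.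
Lemma dmul1 : left_id done_ dmul.
Proof. by move=> [[[] []] []]. Qed.
Lemma dmulV : left_inverse done_ dinv dmul.
Proof. by move=> [[[] []] []]. Qed.

HB.instance Definition _ := Finite_isGroup.Build D4 dmulA dmul1 dmulV.

Local Open Scope ring_scope.

Notation A0 := (@Ordinal 4 0 isT).
Notation A1 := (@Ordinal 4 1 isT).
Notation A2 := (@Ordinal 4 2 isT).
Notation A3 := (@Ordinal 4 3 isT).

Lemma big4 (F : 'I_4 -> int) : \sum_(i < 4) F i = F A0 + F A1 + F A2 + F A3.
Proof.
rewrite !big_ord_recl big_ord0 addr0 !addrA.
by do !congr (_ + _); congr (F _); apply: val_inj.
Qed.

Lemma ord4_cases (P : 'I_4 -> Prop) : P A0 -> P A1 -> P A2 -> P A3 -> forall k, P k.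
Proof.
move=> ? ? ? ? [[|[|[|[|k]]]] Hk] //.
- by have -> : Ordinal Hk = A0 by apply: val_inj.
- by have -> : Ordinal Hk = A1 by apply: val_inj.
- by have -> : Ordinal Hk = A2 by apply: val_inj.
- by have -> : Ordinal Hk = A3 by apply: val_inj.
Qed.

Lemma D4_cases (P : D4 -> Prop) : (forall x y h : bool, P (x, y, h)) -> forall g, P g.
Proof. by move=> H [[x y] h]. Qed.

Definition piD (g : D4) (i : 'I_4) : 'I_4 :=
  let: (x, y, h) := g in
  inZp (2 * (odd (i./2) (+) (if odd i then y else x)) + (odd i (+) h)).

Ltac evalr4 := repeat match goal with |- context [ (r4op ?a ?c == ?k) ] =>
  let v := eval vm_compute in (r4op a c == k) in
  rewrite (_ : (r4op a c == k) = v); last by vm_compute end.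

Ltac evalo := repeat match goal with
  | |- context [ r4op ?a ?c ] =>
    let v := eval vm_compute in (nat_of_ord (r4op a c)) in
    rewrite (_ : r4op a c = @Ordinal 4 v isT); last by apply: val_inj; vm_compute
  | |- context [ piD ?a ?c ] =>
    let v := eval vm_compute in (nat_of_ord (piD a c)) in
    rewrite (_ : piD a c = @Ordinal 4 v isT); last by apply: val_inj; vm_compute
  end.

Lemma qmulE x y : qmul x y = [ffun k => (y A0 + y A2) * x (r4op k A0) + (y A1 + y A3) * x (r4op k A1)].
Proof.
apply/ffunP; elim/ord4_cases; rewrite !ffunE !big4; evalr4; evalo => /=; ring.
Qed.

Definition vec4 (a b c d : int) : ZR4 :=
  [ffun k : 'I_4 => match nat_of_ord k with 0 => a | 1 => b | 2 => c | _ => d end].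

Lemma vec4E (w : ZR4) : w = vec4 (w A0) (w A1) (w A2) (w A3).
Proof. by apply/ffunP; elim/ord4_cases; rewrite ffunE. Qed.

Lemma vec4_ex (w : ZR4) : exists a b c d, w = vec4 a b c d.
Proof. by exists (w A0), (w A1), (w A2), (w A3); apply: vec4E. Qed.

Lemma vec4_inj a b c d a' b' c' d' :
  vec4 a b c d = vec4 a' b' c' d' -> [/\ a = a', b = b', c = c' & d = d'].
Proof.
move=> E; have F k : vec4 a b c d k = vec4 a' b' c' d' k by rewrite E.
by move: (F A0) (F A1) (F A2) (F A3); rewrite !ffunE.
Qed.

Lemma vec4D a b c d a' b' c' d' :
  vec4 a b c d + vec4 a' b' c' d' = vec4 (a + a') (b + b') (c + c') (d + d').
Proof. by apply/ffunP; elim/ord4_cases; rewrite !ffunE. Qed.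

Lemma vec4Mz a b c d n :
  vec4 a b c d *~ n = vec4 (a * n) (b * n) (c * n) (d * n).
Proof. by apply/ffunP; elim/ord4_cases; rewrite ffunMzE !ffunE mulrzz. Qed.

Lemma qmul4 a b c d a' b' c' d' :
  qmul (vec4 a b c d) (vec4 a' b' c' d') =
  vec4 ((a' + c') * a + (b' + d') * c) ((a' + c') * d + (b' + d') * b)
       ((a' + c') * c + (b' + d') * a) ((a' + c') * b + (b' + d') * d).
Proof. apply/ffunP; elim/ord4_cases; rewrite qmulE !ffunE; evalo => /=; ring. Qed.

Lemma basis4E i : basis4 i = vec4 (i == A0)%:R (i == A1)%:R (i == A2)%:R (i == A3)%:R.
Proof.
by apply/ffunP; elim/ord4_cases; rewrite !ffunE; rewrite ?(eq_sym A0) ?(eq_sym A1) ?(eq_sym A2) ?(eq_sym A3).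
Qed.

Lemma basis_mul i j : qmul (basis4 i) (basis4 j) = basis4 (r4op i j).
Proof.
elim/ord4_cases: i; elim/ord4_cases: j; rewrite !basis4E qmul4; evalo; by apply/ffunP; elim/ord4_cases; rewrite !ffunE; vm_compute.
Qed.

Definition Fg (g : D4) (z : ZR4) : ZR4 := [ffun k => z (piD (g^-1)%g k)].

Lemma Fg_add g : {morph Fg g : x y / x + y}.
Proof. by move=> x y; apply/ffunP => k; rewrite !ffunE. Qed.

Lemma Fg_basis g i : Fg g (basis4 i) = basis4 (piD g i).
Proof.
apply/ffunP => k; rewrite !ffunE.
elim/D4_cases: g => x y h; elim/ord4_cases: i; elim/ord4_cases: k;
  case: x; case: y; case: h; vm_compute; reflexivity.
Qed.

Lemma Fg_can g : cancel (Fg g) (Fg (g^-1)%g).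
Proof.
move=> z; apply/ffunP => k; rewrite !ffunE.
elim/D4_cases: g => x y h; elim/ord4_cases: k; case: x; case: y; case: h; evalo; by [].
Qed.

Lemma Fg_bij g : bijective (Fg g).
Proof.
exists (Fg (g^-1)%g); first exact: Fg_can.
by move=> z; have := Fg_can (g^-1)%g z; rewrite invgK.
Qed.

Lemma Fg_mul g : {morph Fg g : x y / qmul x y}.
Proof.
move=> u v; rewrite (vec4E u) (vec4E v) qmul4; apply/ffunP => k; rewrite qmulE !ffunE.
elim/D4_cases: g => x y h; elim/ord4_cases: k; case: x; case: y; case: h;
  evalo; rewrite /= ?ffunE; evalo; rewrite /=; ring.
Qed.

Lemma piD_comp a b i : piD a (piD b i) = piD (a * b)%g i.
Proof.
elim/D4_cases: a => x y h; elim/D4_cases: b => x' y' h'; elim/ord4_cases: i;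
 case: x; case: y; case: h; case: x'; case: y'; case: h'; apply: val_inj; vm_compute; reflexivity.
Qed.

Lemma piD_uniq g g' : piD g A0 = piD g' A0 -> piD g A1 = piD g' A1 -> g = g'.
Proof.
move=> /eqP e0 /eqP e1; apply/eqP; move: e0 e1.
elim/D4_cases: g => x y h; elim/D4_cases: g' => x' y' h';
 case: x; case: y; case: h; case: x'; case: y'; case: h'; vm_compute; by [].
Qed.

Lemma basis4_inj : injective basis4.
Proof.
move=> i j E; have := congr1 (fun w : ZR4 => w i) E; rewrite !ffunE eqxx.
by case: (i == j) /eqP.
Qed.

Section Lin.
Variable f : ZR4 -> ZR4.
Hypothesis fA : {morph f : x y / x + y}.

Lemma lf0 : f 0 = 0.
Proof. have h := fA 0 0; rewrite addr0 in h; by apply: (addrI (f 0)); rewrite -h addr0. Qed.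

Lemma lfN x : f (- x) = - f x.
Proof. by apply: (addrI (f x)); rewrite -fA !subrr lf0. Qed.

Lemma lfMn x n : f (x *+ n) = f x *+ n.
Proof. by elim: n => [|n IH]; rewrite ?mulr0n ?lf0 // !mulrS fA IH. Qed.

Lemma lfMz x n : f (x *~ n) = f x *~ n.
Proof.
case: n => n; first exact: lfMn.
change (f (- (x *+ n.+1)) = - (f x *+ n.+1)); by rewrite lfN lfMn.
Qed.

Lemma lin4 z : f z = f (basis4 A0) *~ z A0 + f (basis4 A1) *~ z A1
                   + f (basis4 A2) *~ z A2 + f (basis4 A3) *~ z A3.
Proof.
have Ez : z = basis4 A0 *~ z A0 + basis4 A1 *~ z A1 + basis4 A2 *~ z A2 + basis4 A3 *~ z A3.
  rewrite !basis4E !vec4Mz !vec4D {1}(vec4E z).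
  congr vec4; rewrite /=; ring.
by rewrite {1}Ez !fA !lfMz.
Qed.
End Lin.

Lemma half_unit (m a : int) : m * (2 * a - 1) = 1 -> a = 0 \/ a = 1.
Proof. move=> H; have := intUnitRing.unitzPl H; rewrite ?qualifE => /orP [/eqP|/eqP] ?; lia. Qed.

Lemma qsum a b c d a1 b1 c1 d1 a2 b2 c2 d2 :
  vec4 a b c d = qmul (vec4 a1 b1 c1 d1) (vec4 a2 b2 c2 d2) ->
  a + b + c + d = (a1 + b1 + c1 + d1) * (a2 + b2 + c2 + d2).
Proof. rewrite qmul4 => /vec4_inj [-> -> -> ->]; ring. Qed.

Lemma shape a b c d : a + b + c + d = 1 ->
  vec4 a b c d = qmul (vec4 a b c d) (vec4 a b c d) ->
  (b = 0 /\ d = 0 /\ c = 1 - a) \/ (a = 0 /\ c = 0 /\ d = 1 - b).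
Proof.
move=> Hs; rewrite qmul4 => /vec4_inj [e0 e1 e2 e3].
have hc : c = 1 - a - b - d by lia.
subst c.
have h1 : (b + d) * ((1 - a - b - d) - a) = 0 by lia.
have h2 : (a + (1 - a - b - d)) * (d - b) = 0 by lia.
move/eqP: h1; rewrite mulf_eq0 => /orP [/eqP h1|/eqP h1];
move/eqP: h2; rewrite mulf_eq0 => /orP [/eqP h2|/eqP h2]; lia.
Qed.

Lemma s_all (s0 s1 s2 s3 w0 w1 w2 w3 : int) : s0 = s0 * s0 -> s1 = s1 * s1 ->
  s2 = s0 * s1 -> s0 = s2 * s1 -> s3 = s1 * s0 -> s1 = s3 * s0 ->
  s0 * w0 + s1 * w1 + s2 * w2 + s3 * w3 = 1 -> [/\ s0 = 1, s1 = 1, s2 = 1 & s3 = 1].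
Proof.
move=> h0 h1 h2 h02 h3 h13 hw.
have : s0 * (s0 - 1) = 0 by lia.
move/eqP; rewrite mulf_eq0 => /orP [/eqP e|/eqP e].
- rewrite e in h2 h3 h13 hw.
  have e1 : s1 = 0 by lia.
  have e2 : s2 = 0 by lia.
  have e3 : s3 = 0 by lia.
  rewrite e1 e2 e3 in hw; lia.
- have e' : s0 = 1 by lia.
  rewrite e' in h2 h02 h3 h13 hw *.
  have e2 : s2 = s1 by lia.
  rewrite e2 in h02 hw *.
  have e1 : s1 = 1 by lia.
  rewrite e1 in h3 *.
  have e3 : s3 = 1 by lia.
  by rewrite e3.
Qed.

Lemma bA0 : basis4 A0 = vec4 1 0 0 0. Proof. by rewrite basis4E. Qed.
Lemma bA1 : basis4 A1 = vec4 0 1 0 0. Proof. by rewrite basis4E. Qed.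

Lemma classify (f : ZR4 -> ZR4) : is_ring_aut f ->
  exists g : D4, forall i, f (basis4 i) = basis4 (piD g i).
Proof.
move=> [fA fbij fM].
have finj : injective f := bij_inj fbij.
case: fbij => finv fK fKV.
have hM i j : f (basis4 (r4op i j)) = qmul (f (basis4 i)) (f (basis4 j)).
  by rewrite -fM basis_mul.
have [a0 [b0 [c0 [d0 V0]]]] := vec4_ex (f (basis4 A0)).
have [a1 [b1 [c1 [d1 V1]]]] := vec4_ex (f (basis4 A1)).
have [a2 [b2 [c2 [d2 V2]]]] := vec4_ex (f (basis4 A2)).
have [a3 [b3 [c3 [d3 V3]]]] := vec4_ex (f (basis4 A3)).
have E00 : vec4 a0 b0 c0 d0 = qmul (vec4 a0 b0 c0 d0) (vec4 a0 b0 c0 d0).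
  by rewrite -V0 -hM; congr (f (basis4 _)); apply: val_inj.
have E11 : vec4 a1 b1 c1 d1 = qmul (vec4 a1 b1 c1 d1) (vec4 a1 b1 c1 d1).
  by rewrite -V1 -hM; congr (f (basis4 _)); apply: val_inj.
have E22 : vec4 a2 b2 c2 d2 = qmul (vec4 a2 b2 c2 d2) (vec4 a2 b2 c2 d2).
  by rewrite -V2 -hM; congr (f (basis4 _)); apply: val_inj.
have E33 : vec4 a3 b3 c3 d3 = qmul (vec4 a3 b3 c3 d3) (vec4 a3 b3 c3 d3).
  by rewrite -V3 -hM; congr (f (basis4 _)); apply: val_inj.
have E02 : vec4 a0 b0 c0 d0 = qmul (vec4 a0 b0 c0 d0) (vec4 a2 b2 c2 d2).
  by rewrite -V0 -V2 -hM; congr (f (basis4 _)); apply: val_inj.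
have E13 : vec4 a1 b1 c1 d1 = qmul (vec4 a1 b1 c1 d1) (vec4 a3 b3 c3 d3).
  by rewrite -V1 -V3 -hM; congr (f (basis4 _)); apply: val_inj.
have E01 : vec4 a2 b2 c2 d2 = qmul (vec4 a0 b0 c0 d0) (vec4 a1 b1 c1 d1).
  by rewrite -V0 -V1 -V2 -hM; congr (f (basis4 _)); apply: val_inj.
have E10 : vec4 a3 b3 c3 d3 = qmul (vec4 a1 b1 c1 d1) (vec4 a0 b0 c0 d0).
  by rewrite -V0 -V1 -V3 -hM; congr (f (basis4 _)); apply: val_inj.
have E21 : vec4 a0 b0 c0 d0 = qmul (vec4 a2 b2 c2 d2) (vec4 a1 b1 c1 d1).
  by rewrite -V0 -V1 -V2 -hM; congr (f (basis4 _)); apply: val_inj.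
have E30 : vec4 a1 b1 c1 d1 = qmul (vec4 a3 b3 c3 d3) (vec4 a0 b0 c0 d0).
  by rewrite -V0 -V1 -V3 -hM; congr (f (basis4 _)); apply: val_inj.
have N02 : ~ (a0 = a2 /\ b0 = b2 /\ c0 = c2 /\ d0 = d2).
  move=> [e0 [e1 [e2 e3]]]; have : f (basis4 A0) = f (basis4 A2) by rewrite V0 V2 e0 e1 e2 e3.
  by move/finj/basis4_inj/(congr1 val).
have Z0 := fKV (basis4 A0).
have Z1 := fKV (basis4 A1).
move: (finv (basis4 A0)) Z0 => z Z0.
move: (finv (basis4 A1)) Z1 => z' Z1.
rewrite (lin4 fA) V0 V1 V2 V3 !vec4Mz !vec4D bA0 in Z0.
rewrite (lin4 fA) V0 V1 V2 V3 !vec4Mz !vec4D bA1 in Z1.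
case/vec4_inj: Z0 => z00 z01 z02 z03.
case/vec4_inj: Z1 => z10 z11 z12 z13.
have [hs0 hs1 hs2 hs3] := s_all (qsum E00) (qsum E11) (qsum E01) (qsum E21) (qsum E10) (qsum E30)
  (w0 := z A0) (w1 := z A1) (w2 := z A2) (w3 := z A3) ltac:(lia).
have sh0 := shape hs0 E00.
have sh1 := shape hs1 E11.
have sh2 := shape hs2 E22.
have sh3 := shape hs3 E33.
rewrite qmul4 in E02; case/vec4_inj: E02 => e020 e021 e022 e023.
rewrite qmul4 in E13; case/vec4_inj: E13 => e130 e131 e132 e133.
rewrite qmul4 in E01; case/vec4_inj: E01 => e010 e011 e012 e013.
rewrite qmul4 in E10; case/vec4_inj: E10 => e100 e101 e102 e103.
clear E00 E11 E22 E33 E21 E30 hM.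
move: V0 V1 V2 V3 N02 e020 e021 e022 e023 e130 e131 e132 e133 e010 e011 e012 e013 e100 e101 e102 e103 z00 z01 z02 z03 z10 z11 z12 z13.
case: sh0 => [[-> [-> ->]]|[-> [-> ->]]]; case: sh1 => [[-> [-> ->]]|[-> [-> ->]]];
case: sh2 => [[-> [-> ->]]|[-> [-> ->]]]; case: sh3 => [[-> [-> ->]]|[-> [-> ->]]];
  move=> V0 V1 V2 V3 N02 e020 e021 e022 e023 e130 e131 e132 e133 e010 e011 e012 e013 e100 e101 e102 e103 z00 z01 z02 z03 z10 z11 z12 z13;
  try (exfalso; lia).
- have ea2 : a2 = 1 - a0 by lia.
  have eb3 : b3 = 1 - b1 by lia.
  rewrite ea2 in z00 z02; rewrite eb3 in z11 z13.
  have ha : a0 = 0 \/ a0 = 1 by apply: (half_unit (m := z A0 - z A2)); lia.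
  have hb : b1 = 0 \/ b1 = 1 by apply: (half_unit (m := z' A1 - z' A3)); lia.
  exists (a0 == 0, b1 == 0, false).
  elim/ord4_cases; rewrite ?V0 ?V1 ?V2 ?V3 ?ea2 ?eb3;
  case: ha => ->; case: hb => ->; evalo; by rewrite basis4E; congr vec4.
- have eb2 : b2 = 1 - b0 by lia.
  have ea3 : a3 = 1 - a1 by lia.
  rewrite eb2 in z11 z13; rewrite ea3 in z00 z02.
  have hb : b0 = 0 \/ b0 = 1 by apply: (half_unit (m := z' A0 - z' A2)); lia.
  have ha : a1 = 0 \/ a1 = 1 by apply: (half_unit (m := z A1 - z A3)); lia.
  exists (b0 == 0, a1 == 0, true).
  elim/ord4_cases; rewrite ?V0 ?V1 ?V2 ?V3 ?eb2 ?ea3;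
  case: ha => ->; case: hb => ->; evalo; by rewrite basis4E; congr vec4.
Qed.


Definition phiD (f : AutZR4) : D4 :=
  odflt 1%g [pick g : D4 | [forall i, sval f (basis4 i) == basis4 (piD g i)]].

Lemma phiP (f : AutZR4) i : sval f (basis4 i) = basis4 (piD (phiD f) i).
Proof.
rewrite /phiD; case: pickP => [g /forallP H | H]; first exact/eqP/H.
have [g Hg] := classify (svalP f).
have := H g; rewrite (_ : [forall i, _] = true) //.
by apply/forallP => j; apply/eqP; apply: Hg.
Qed.

Lemma phi_eq (f : AutZR4) g : (forall i, sval f (basis4 i) = basis4 (piD g i)) -> phiD f = g.
Proof.
move=> H; apply: piD_uniq; apply: basis4_inj; by rewrite -H phiP.
Qed.

Lemma Fdet (f : AutZR4) : sval f = Fg (phiD f).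
Proof.
apply: functional_extensionality => z.
have [fA _ _] := svalP f.
rewrite (lin4 fA) (lin4 (@Fg_add (phiD f))) !Fg_basis !phiP //.
Qed.

Lemma Fg_aut g : is_ring_aut (Fg g).
Proof. split; [exact: Fg_add | exact: Fg_bij | exact: Fg_mul]. Qed.

Local Close Scope ring_scope.

Local Open Scope group_scope.

Definition Nset : {set D4} := [set g : D4 | ~~ g.2].
Definition Hset : {set D4} := [set g : D4 | ~~ g.1.1 && ~~ g.1.2].

Lemma Ngrp : group_set Nset.
Proof.
apply/group_setP; split; first by rewrite inE.
by move=> [[x y] h] [[x' y'] h']; rewrite !inE /=; case: h; case: h'.
Qed.
Lemma Hgrp : group_set Hset.
Proof.
apply/group_setP; split; first by rewrite inE.
by move=> [[x y] h] [[x' y'] h']; rewrite !inE /=; case: x; case: y; case: x'; case: y'; case: h; case: h'.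
Qed.
Definition NG := Group Ngrp.
Definition HG := Group Hgrp.

Lemma sdp : NG ><| HG = [set: D4].
Proof.
rewrite sdprodE.
- apply/setP => g; rewrite inE; apply/mulsgP.
  case: g => [[x y] h].
  exists (if h then (y, x, false) else (x, y, false)) (false, false, h);
   by case: x; case: y; case: h; rewrite ?inE.
- apply/subsetP => g Hg; rewrite inE; apply/subsetP => n; rewrite mem_conjg !inE.
  move: Hg; rewrite inE.
  case: g => [[x y] h] /=; case: n => [[x' y'] h'].
  by case: x; case: y; case: h; case: x'; case: y'; case: h'.
- apply/setP => g; rewrite !inE; case: g => [[x y] h].
  by case: x; case: y; case: h.
Qed.

Lemma Nab : 2.-abelem NG.
Proof.
apply/abelemP => //; split.
- apply/centsP => a; rewrite inE => Ha b; rewrite inE => Hb; apply/commgP.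
  move: a b Ha Hb => [[x y] h] [[x' y'] h'].
  by case: x; case: y; case: h; case: x'; case: y'; case: h'.
- move=> [[x y] h]; rewrite inE.
  by case: x; case: y; case: h.
Qed.

Lemma Hab : 2.-abelem HG.
Proof.
apply/abelemP => //; split.
- apply/centsP => a; rewrite inE => Ha b; rewrite inE => Hb; apply/commgP.
  move: a b Ha Hb => [[x y] h] [[x' y'] h'].
  by case: x; case: y; case: h; case: x'; case: y'; case: h'.
- move=> [[x y] h]; rewrite inE.
  by case: x; case: y; case: h.
Qed.

Lemma Z22ab : 2.-abelem [set: 'Z_2 * 'Z_2].
Proof.
apply/abelemP => //; split.
- apply/centsP => a _ b _; apply/commgP.
  move: a b => [[[|[|?]] ?] [[|[|?]] ?]] [[[|[|?]] ?] [[|[|?]] ?]] //; by apply/eqP.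
- by move=> [[[|[|?]] ?] [[|[|?]] ?]] _ //; apply/eqP.
Qed.

Lemma Z2ab : 2.-abelem [set: 'Z_2].
Proof.
apply/abelemP => //; split.
- apply/centsP => a _ b _; apply/commgP.
  move: a b => [[|[|?]] ?] [[|[|?]] ?] //; by apply/eqP.
- by move=> [[|[|?]] ?] _ //; apply/eqP.
Qed.

Lemma cardN : #|NG| = 4%N.
Proof.
have -> : #|NG| = #|setX [set: bool * bool] [set false]|.
  by apply: eq_card => -[[x y] h]; rewrite !inE; case: h.
by rewrite cardsX cardsT card_prod card_bool cards1.
Qed.

Lemma cardH : #|HG| = 2%N.
Proof.
have -> : #|HG| = #|setX [set (false, false)] [set: bool]|.
  by apply: eq_card => -[[x y] h]; rewrite !inE; case: x; case: y.
by rewrite cardsX cardsT card_bool cards1.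
Qed.

Lemma isoN : NG \isog [set: 'Z_2 * 'Z_2].
Proof.
rewrite isog_sym (isog_abelem_card _ Z22ab) Nab cardN cardsT card_prod.
by rewrite card_ord.
Qed.

Lemma isoH : HG \isog [set: 'Z_2].
Proof.
rewrite isog_sym (isog_abelem_card _ Z2ab) Hab cardH cardsT.
by rewrite card_ord.
Qed.

Lemma notcent : ~~ (HG \subset 'C(NG)).
Proof.
apply/negP => /subsetP /(_ (false, false, true)).
rewrite inE => /(_ isT) /centP /(_ (true, false, false)).
by rewrite inE => /(_ isT).
Qed.


Theorem theorem6p4 :
  exists (gT : finGroupType) (G N H : {group gT}) (phi : AutZR4 -> gT),
    [/\ N ><| H = G,
        N \isog [set: 'Z_2 * 'Z_2],
        H \isog [set: 'Z_2],
        ~~ (H \subset 'C(N)) &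
        [/\ forall f, phi f \in G,
            injective phi,
            forall g, g \in G -> exists f, phi f = g &
            forall f g h : AutZR4,
              (forall x, sval h x = sval f (sval g x)) -> phi h = phi f * phi g]].
Proof.
exists D4, [set: D4]%G, NG, HG, phiD.
split; [exact: sdp | exact: isoN | exact: isoH | exact: notcent |].
split.
- by move=> f; rewrite inE.
- move=> f f' E.
  have h : sval f = sval f' by rewrite (Fdet f) (Fdet f') E.
  move: f f' h {E} => [f pf] [f' pf'] /= h; subst f'.
  by congr exist; apply: proof_irrelevance.
- move=> g _; exists (exist _ (Fg g) (Fg_aut g)); apply: phi_eq => i; exact: Fg_basis.
- move=> f g h H; apply: phi_eq => i.
  by rewrite H phiP phiP piD_comp.
Qed.
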